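(* Let $X$ be a finite-dimensional real Banach space and let $A \subset X$ be a bounded set with $d(0, A) > 0$. Let $I$ be an index set with $m$ elements and $\{x_i : i \in I\} \subset S_X$. If for every selection $\phi$ of the subdifferential mapping $\partial\|\cdot\|$ one has $\sup_{i \in I} \phi(x_i)(x) > 0$ for every $x \in \overline{A}$, then there exist $y_i \in \mathbb{R}^+ x_i$ and $r_i > 0$ with $\|y_i\| \ge r_i$ for all $i \in I$ such that $\{B(y_i, r_i)\}_{i \in I}$ covers $A$.
   Context: $d(0,A)=\inf\{\|a\|:a\in A\}$; $\overline{A}$ is the closure. $\mathbb{R}^+ x_i = \{ t x_i : t > 0\}$; $B(c,r) = \{ z : \|c - z\| < r\}$. $\partial\|x\| = \{ x^* \in S_{X^*} : x^*(x) = \|x\|\}$ for $x \neq 0$; a selection of $\partial\|\cdot\|$ is a map $\phi$ with $\phi(x) \in \partial\|x\|$ for each non-zero $x$. *)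

(* Defs.v *)
From HB Require Import structures.
From mathcomp Require Import all_boot all_order all_algebra.
From mathcomp Require Import all_classical all_reals all_analysis.
Set Implicit Arguments. Unset Strict Implicit. Unset Printing Implicit Defensive.
Import Order.TTheory GRing.Theory Num.Theory.
Import numFieldNormedType.Exports.
Local Open Scope classical_set_scope.
Local Open Scope ring_scope.

Section Defs.
Variables (R : realType) (X : normedModType R).

Definition finite_dim : Prop :=
  exists n (e : 'I_n -> X), forall x : X,
    exists c : 'I_n -> R, x = \sum_(i < n) c i *: e i.

Definition unit_sphere : set X := [set x | `|x| = 1].

Definition is_linear_functional (f : X -> R) : Prop :=
  forall (a : R) (x y : X), f (a *: x + y) = a * f x + f y.

Definition dual_norm (f : X -> R) : R :=
  sup [set `|f z| | z in [set z : X | `|z| <= 1]].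

Definition in_dual_sphere (f : X -> R) : Prop :=
  [/\ is_linear_functional f,
      has_ubound [set `|f z| | z in [set z : X | `|z| <= 1]]
    & dual_norm f = 1].

(* The subdifferential of the norm at x <> 0. *)
Definition subdiff_norm (x : X) : set (X -> R) :=
  [set f | in_dual_sphere f /\ f x = `|x|].

Definition subdiff_selection (phi : X -> (X -> R)) : Prop :=
  forall x : X, x != 0 -> subdiff_norm x (phi x).

Definition oball (c : X) (r : R) : set X := [set z | `|c - z| < r].

End Defs.

(* Main.v *)
Require Import Defs.
From HB Require Import structures.
From mathcomp Require Import all_boot all_order all_algebra.
From mathcomp Require Import all_classical all_reals all_analysis.
From mathcomp Require Import ring lra.
Import Order.TTheory GRing.Theory Num.Theory.
Import numFieldNormedType.Exports.
Local Open Scope classical_set_scope.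
Local Open Scope ring_scope.
Set Implicit Arguments. Unset Strict Implicit. Unset Printing Implicit Defensive.

Section HB.
Variables (R : realType) (X : normedModType R).

Definition valid (D : set X) (f : X -> R) :=
  [/\ D 0, (forall a u v, D u -> D v -> D (a *: u + v)),
      (forall a u v, D u -> D v -> f (a *: u + v) = a * f u + f v) &
      (forall u, D u -> f u <= `|u|)].

Lemma valid0 D f : valid D f -> f 0 = 0.
Proof.
case=> D0 _ fl _; have := fl 1 0 0 D0 D0.
by rewrite scaler0 addr0 mul1r => h; apply: (addrI (f 0)); rewrite addr0 -h.
Qed.

Lemma validZ D f a u : valid D f -> D u -> f (a *: u) = a * f u.
Proof.
move=> V Du; have [D0 _ fl _] := V.
by rewrite -[a *: u]addr0 fl // (valid0 V) addr0.
Qed.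

Lemma validD D f u v : valid D f -> D u -> D v -> f (u + v) = f u + f v.
Proof.
move=> [D0 _ fl _] Du Dv; by rewrite -[u in LHS]scale1r fl // mul1r.
Qed.

Lemma validDD D f u v : valid D f -> D u -> D v -> D (u + v).
Proof. by move=> [_ Dc _ _] Du Dv; rewrite -[u]scale1r; apply: Dc. Qed.

Lemma validDZ D f a u : valid D f -> D u -> D (a *: u).
Proof. by move=> [D0 Dc _ _] Du; rewrite -[_ *: _]addr0; apply: Dc. Qed.

Lemma extend D f w : valid D f -> exists D' f',
  [/\ valid D' f' /\ D' w, D `<=` D', (forall u, D u -> f' u = f u),
   (forall y, D' y -> exists u t, D u /\ y = u + t *: w) &
   (forall b, (forall u, D u -> f u - `|u - w| <= b) -> f' w <= b)].
Proof.
move=> V; have [D0 Dc fl fb] := V.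
have [Dw|nDw] := pselect (D w).
  exists D, f; split => //.
  - by move=> y Dy; exists y, 0; rewrite scale0r addr0.
  - by move=> b /(_ w Dw); rewrite subrr normr0 subr0.
pose S := [set f u - `|u - w| | u in D].
have key u v : D u -> D v -> f u - `|u - w| <= `|v + w| - f v.
  move=> Du Dv; rewrite lerBrDr addrAC lerBlDr -(validD V) //.
  apply: le_trans (fb _ (validDD V Du Dv)) _.
  have -> : u + v = (u - w) + (v + w) by rewrite [v + w]addrC addrA subrK.
  by rewrite addrC ler_normD.
have hS : has_ubound S.
  by exists (`|0 + w| - f 0) => _ [u Du <-]; apply: key.
have S0 : S !=set0 by exists (f 0 - `|0 - w|), 0.
set c := sup S.
have hub u : D u -> f u - `|u - w| <= c.
  by move=> Du; apply: ub_le_sup => //; exists u.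
have hlb v : D v -> c <= `|v + w| - f v.
  by move=> Dv; apply: ge_sup => // _ [u Du <-]; apply: key.
have uniq u1 t1 u2 t2 : D u1 -> D u2 -> u1 + t1 *: w = u2 + t2 *: w ->
    t1 = t2 /\ u1 = u2.
  move=> Du1 Du2 E.
  have [et|net] := eqVneq t1 t2.
    by split => //; move: E; rewrite et => /addIr.
  exfalso; apply: nDw.
  have -> : w = (t1 - t2)^-1 *: (u2 - u1).
    apply/(@scalerI _ _ (t1 - t2)); first by rewrite subr_eq0.
    rewrite scalerA divff ?subr_eq0 // scale1r scalerBl.
    rewrite -[u2](addrK (t2 *: w)) -E.
    by rewrite addrAC [u1 + _ - u1]addrAC subrr add0r.
  apply: validDZ V _; rewrite addrC -scaleN1r; exact: Dc.
pose D' := [set y | exists u t, D u /\ y = u + t *: w].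
have [f' hf'] : {f' : X -> R & forall y u t, D u -> y = u + t *: w ->
    f' y = f u + t * c}.
  apply: (@choice _ _ (fun y r => forall u t, D u -> y = u + t *: w ->
    r = f u + t * c)) => y.
  have [[u0 [t0 [Du0 ->]]]|nD'] := pselect (D' y).
    exists (f u0 + t0 * c) => u t Du E.
    by have [-> ->] := uniq _ _ _ _ Du0 Du E.
  by exists 0 => u t Du E; exfalso; apply: nD'; exists u, t.
exists D', f'; split; first split.
- split.
  + by exists 0, 0; rewrite scale0r addr0.
  + move=> a _ _ [u1 [t1 [Du1 ->]]] [u2 [t2 [Du2 ->]]].
    exists (a *: u1 + u2), (a * t1 + t2); split; first exact: Dc.
    by rewrite scalerDr scalerDl scalerA addrACA.
  + move=> a _ _ [u1 [t1 [Du1 ->]]] [u2 [t2 [Du2 ->]]].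
    rewrite (hf' _ (a *: u1 + u2) (a * t1 + t2)); first last.
    * by rewrite scalerDr scalerDl scalerA addrACA.
    * exact: Dc.
    rewrite (hf' _ u1 t1) // (hf' _ u2 t2) // fl //; ring.
  + move=> _ [u [t [Du ->]]]; rewrite (hf' _ u t) //.
    have [tlt0|tgt0|t0] := ltgtP t 0; last first.
    * rewrite t0 scale0r addr0 mul0r addr0; exact: fb.
    * have := hlb _ (validDZ t^-1 V Du).
      rewrite (validZ _ V Du).
      have -> : t^-1 *: u + w = t^-1 *: (u + t *: w).
        by rewrite scalerDr scalerA mulVf ?gt_eqF // scale1r.
      rewrite normrZ gtr0_norm ?invr_gt0 // -mulrBr => h.
      rewrite -lerBrDl; have := ler_wpM2l (ltW tgt0) h.
      by rewrite mulrA mulfV ?gt_eqF // mul1r.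
    * have := hub _ (validDZ (- t)^-1 V Du).
      rewrite (validZ _ V Du).
      have -> : (- t)^-1 *: u - w = (- t)^-1 *: (u + t *: w).
        by rewrite scalerDr scalerA invrN mulNr mulVf ?lt_eqF // scaleN1r.
      have nt : 0 < - t by rewrite oppr_gt0.
      rewrite normrZ gtr0_norm ?invr_gt0 // -mulrBr => h.
      have := ler_wpM2l (ltW nt) h.
      rewrite mulrA mulfV ?gt_eqF // mul1r => h2; lra.
- by exists 0, 1; rewrite scale1r add0r.
- by move=> u Du; exists u, 0; rewrite scale0r addr0.
- by move=> u Du; rewrite (hf' _ u 0) // ?mul0r ?addr0 // scale0r addr0.
- by move=> y.
- move=> b hb; rewrite (hf' _ 0 1) // ?scale1r ?add0r // (valid0 V) add0r mul1r.
  by apply: ge_sup => // _ [u Du <-]; apply: hb.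
Qed.


Lemma extend_list D f (s : seq X) : valid D f -> exists D' f',
  [/\ valid D' f', D `<=` D', (forall u, D u -> f' u = f u) &
      (forall w, w \in s -> D' w)].
Proof.
elim: s D f => [|w s IH] D f V.
  by exists D, f; split.
have [D1 [f1 [[V1 D1w] sub1 ext1 _ _]]] := extend w V.
have [D' [f' [V' sub' ext' hs]]] := IH _ _ V1.
exists D', f'; split => //.
- by move=> u /sub1 /sub'.
- by move=> u Du; rewrite ext' ?ext1 //; exact: sub1.
- move=> y; rewrite inE => /orP[/eqP ->|ys]; last exact: hs.
  exact: sub'.
Qed.

Lemma validN D f u : valid D f -> D u -> f (- u) = - f u.
Proof. by move=> V Du; rewrite -scaleN1r (validZ _ V Du) mulN1r. Qed.

Lemma hb_point x z : @finite_dim R X -> `|x| = 1 ->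
  (forall s, 0 < s -> 1 <= `|x - s *: z|) ->
  exists phi : X -> R, [/\ in_dual_sphere phi, phi x = 1 & phi z <= 0].
Proof.
move=> [n [e espan]] nx hz.
pose D0 := [set u : X | u = 0].
pose f0 := fun _ : X => (0 : R).
have V0 : valid D0 f0.
  split => //.
  - by move=> a u v -> ->; rewrite scaler0 addr0.
  - by move=> a u v _ _; rewrite /f0 mulr0 addr0.
  - by move=> u _; rewrite /f0.
have [D1 [f1 [[V1 D1x'] sub1 ext1 rep1 b1]]] := extend (- x) V0.
have f1x' : f1 (- x) <= -1.
  by apply: b1 => u ->; rewrite /f0 !sub0r !opprK nx.
have D1x : D1 x by rewrite -[x]opprK -scaleN1r; exact: validDZ V1 _.
have f1x : f1 x = 1.
  apply/le_anti/andP; split; first by rewrite -nx; case: V1 => _ _ _; apply.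
  by rewrite -[x]opprK (validN V1 D1x') lerNr.
have f1x'' : f1 (- x) = -1 by rewrite (validN V1 D1x) f1x.
have [D2 [f2 [[V2 D2z] sub2 ext2 _ b2]]] := extend z V1.
have f2z : f2 z <= 0.
  apply: b2 => u /rep1 [u0 [t [-> ->]]].
  rewrite add0r (validZ _ V1 D1x') f1x'' mulrN1 scalerN -scaleNr.
  have [s0|s0] := lerP (- t) 0.
    by rewrite subr_le0; exact: le_trans s0 (normr_ge0 _).
  have h : 1 <= `|x - (- t)^-1 *: z| by apply: hz; rewrite invr_gt0.
  set s := - t in s0 h *.
  have -> : s *: x - z = s *: (x - s^-1 *: z).
    by rewrite scalerBr scalerA mulfV ?gt_eqF // scale1r.
  rewrite normrZ gtr0_norm // subr_le0 -{1}[s]mulr1.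
  by rewrite ler_pM2l.
have [D3 [f3 [V3 sub3 ext3 hs3]]] := extend_list [seq e i | i <- enum 'I_n] V2.
have D3all : forall u, D3 u.
  move=> u; have [c ->] := espan u.
  apply: big_ind.
  - by case: V3.
  - by move=> a b Da Db; exact: validDD V3 Da Db.
  - move=> i _; apply: validDZ V3 _; apply: hs3.
    by apply/mapP; exists i; rewrite ?mem_enum.
have [_ _ fl3 fb3] := V3.
have f3x : f3 x = 1 by rewrite ext3 ?ext2 //; exact: sub2.
have f3z : f3 z <= 0 by rewrite ext3.
have nb u : `|f3 u| <= `|u|.
  rewrite ler_norml fb3 // andbT lerNl -(validN V3) // -normrN.
  exact: fb3.
exists f3; split => //.
have hub : has_ubound [set `|f3 z0| | z0 in [set z0 : X | `|z0| <= 1]].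
  by exists 1 => _ [z0 hz0 <-]; exact: le_trans (nb z0) hz0.
split => //.
- by move=> a u v; apply: fl3.
- apply/le_anti/andP; split.
    apply: ge_sup; first by exists `|f3 0|, 0 => //=; rewrite normr0.
    by move=> _ [z0 hz0 <-]; exact: le_trans (nb z0) hz0.
  have := ub_le_sup hub; apply.
  by exists x; rewrite /= ?nx ?f3x ?normr1.
Qed.

End HB.
Section Topo.
Variables (R : realType) (X : completeNormedModType R) (n : nat) (e : 'I_n -> X).

Definition Tm (c : 'rV[R]_n) : X := \sum_(i < n) c ord0 i *: e i.

Lemma Tm_lin a c d : Tm (a *: c + d) = a *: Tm c + Tm d.
Proof.
rewrite /Tm scaler_sumr -big_split; apply: eq_bigr => i _.
by rewrite !mxE scalerDl scalerA.
Qed.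

Lemma Tm_cont : continuous Tm.
Proof.
suff H : forall s : seq 'I_n,
    continuous (fun c : 'rV[R]_n => \sum_(i <- s) c ord0 i *: e i).
  exact: H.
elim => [|i s IH].
  under eq_fun do rewrite big_nil.
  exact: cst_continuous.
under eq_fun do rewrite big_cons.
have hf : continuous (fun c : 'rV[R]_n => c ord0 i *: e i).
  move=> c; apply: continuousZr_tmp; exact: coord_continuous.
move=> c; exact: (continuousD (hf c) (IH c)).
Qed.

Lemma closed_ballE0 (k : R) (c : 'rV[R]_n) : 0 < k ->
  closed_ball 0 k c = (`|c| <= k).
Proof. by move=> k0; rewrite closed_ballE //= /closed_ball_ /= sub0r normrN. Qed.

Lemma C_closed (k : R) : 0 < k -> closed (Tm @` closed_ball (0 : 'rV[R]_n) k).
Proof.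
move=> k0; apply: compact_closed; first exact: norm_hausdorff.
apply: continuous_compact; first exact: continuous_subspaceT Tm_cont.
apply: bounded_closed_compact; last exact: closed_ball_closed.
exists k; split; first exact: num_real.
move=> M kM c; rewrite closed_ballE0 // => hc.
exact: le_trans hc (ltW kM).
Qed.

Lemma Tm_Z a c : Tm (a *: c) = a *: Tm c.
Proof.
by rewrite /Tm scaler_sumr; apply: eq_bigr => i _; rewrite !mxE scalerA.
Qed.

Lemma Tm_B c d : Tm (c - d) = Tm c - Tm d.
Proof.
rewrite /Tm -sumrB; apply: eq_bigr => i _.
by rewrite !mxE scalerBl.
Qed.

Lemma coords_bound : (forall x : X, exists c : 'I_n -> R, x = \sum_(i < n) c i *: e i) ->
  forall M : R, exists K : R, forall a : X, `|a| <= M ->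
    exists c : 'rV[R]_n, `|c| <= K /\ a = Tm c.
Proof.
move=> span M.
have spanT x : exists c, x = Tm c.
  have [c ->] := span x; exists (\row_i c i); rewrite /Tm.
  by apply: eq_bigr => i _; rewrite mxE.
pose C (k : nat) := Tm @` closed_ball (0 : 'rV[R]_n) (k.+1%:R).
pose F k := ~` C k.
have Fo k : open (F k) by apply: closed_openC; exact: C_closed.
have [k nd] : exists k, ~ dense (F k).
  apply: contrapT => hall.
  have dF : dense (\bigcap_k F k).
    apply: Baire => k; split => //.
    by apply: contrapT => hk; apply: hall; exists k.
  have [y [_ hy]] := dF setT (ex_intro _ 0 I) openT.
  have [c yc] := spanT y.
  apply: (hy (Num.truncn `|c|) I); exists c => //.
  by rewrite closed_ballE0 // ltW // truncnS_gt.
have [U0 [[p pO] OF]] := denseNE nd.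
move: pO => /open_nbhs_nbhs /nbhs_ballP [r r0 bpr].
have inC y : `|p - y| < r -> C k y.
  move=> hy; apply: contrapT => nC.
  have : (U0 `&` F k) y by split => //; apply: bpr; rewrite -ball_normE.
  by rewrite OF.
pose M1 := `|M| + 1.
have M10 : 0 < M1 by rewrite /M1 ltr_wpDl.
pose mu := r / (2 * M1).
have mu0 : 0 < mu by rewrite divr_gt0 // mulr_gt0.
exists ((2 * mu)^-1 * (2 * k.+1%:R)) => a ha.
have hmu : `|mu *: a| < r.
  rewrite normrZ gtr0_norm //.
  have : `|a| <= M1 by rewrite /M1 (le_trans ha) // (le_trans (ler_norm M)) // lerDl.
  move=> haM; apply: (le_lt_trans (ler_wpM2l (ltW mu0) haM)).
  rewrite /mu -mulrA [_^-1 * _]mulrC mulrA.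
  have -> : r * M1 / (2 * M1) = r / 2.
    by field; rewrite gt_eqF.
  by rewrite ltr_pdivrMr // ltr_pMr // ltr1n.
have [c1 hc1 e1] : C k (p + mu *: a) by apply: inC; rewrite opprD addrA subrr add0r normrN.
have [c2 hc2 e2] : C k (p - mu *: a) by apply: inC; rewrite opprB addrC subrK.
rewrite closed_ballE0 // in hc1 hc2.
have pos : 0 < (2 * mu)^-1 by rewrite invr_gt0 mulr_gt0.
exists ((2 * mu)^-1 *: (c1 - c2)); split.
  rewrite normrZ gtr0_norm // ler_pM2l //.
  apply: le_trans (ler_normB _ _) _; rewrite mulr_natl mulr2n; rewrite closed_ballE0 // in hc2; exact: lerD hc1 hc2.
rewrite Tm_Z Tm_B e1 e2 opprB addrC addrA subrK -scalerDl -mulr2n scalerA.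
have -> : mu *+ 2 = 2 * mu by rewrite -mulr_natl.
by rewrite mulVf ?scale1r // gt_eqF // mulr_gt0.
Qed.

End Topo.

Section Main.
Variables (R : realType) (X : normedModType R).

Lemma lin0 (f : X -> R) : is_linear_functional f -> f 0 = 0.
Proof.
move=> fl; have := fl 1 0 0; rewrite scaler0 addr0 mul1r => h.
by apply: (addrI (f 0)); rewrite addr0 -h.
Qed.

Lemma linZ (f : X -> R) a u : is_linear_functional f -> f (a *: u) = a * f u.
Proof. by move=> fl; rewrite -[a *: u]addr0 fl lin0 // addr0. Qed.

Lemma subdiff_exists w : @finite_dim R X -> w != 0 -> exists g, @subdiff_norm R X w g.
Proof.
move=> fd w0.
have nw0 : `|w| != 0 by rewrite normr_eq0.
pose v := `|w|^-1 *: w.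
have hz : forall s, 0 < s -> 1 <= `|v - s *: 0|.
  by move=> s _; rewrite scaler0 subr0 normfZV.
have [phi [ds px _]] := @hb_point R X v 0 fd (normfZV w0) hz.
exists phi; split => //.
have -> : w = `|w| *: (`|w|^-1 *: w) by rewrite scalerA mulfV // scale1r.
by case: ds => fl _ _; rewrite linZ // px mulr1 normrZ normr_id normfZV // mulr1.
Qed.

Lemma mono_ball (x z : X) t t' : `|x| = 1 -> t <= t' ->
  `|t *: x - z| < t -> `|t' *: x - z| < t'.
Proof.
move=> nx tt' h.
have -> : t' *: x - z = (t *: x - z) + (t' - t) *: x.
  by rewrite scalerBl addrCA addrAC subrr add0r.
apply: le_lt_trans (ler_normD _ _) _.
rewrite normrZ nx mulr1 ger0_norm ?subr_ge0 //.
move: h; set N := `|_ - z|; lra.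
Qed.

End Main.

Unset Implicit Arguments.

Theorem mainTheorem10 (R : realType) (X : completeNormedModType R)
  (A : set X) (m : nat) (I : finType) (x : I -> X) :
  @finite_dim R X ->
  (exists M : R, forall a, A a -> `|a| <= M) ->
  (exists delta : R, 0 < delta /\ forall a, A a -> delta <= `|a|) ->
  #|I| = m ->
  (forall i, unit_sphere (x i)) ->
  (forall phi : X -> (X -> R), subdiff_selection phi ->
     forall z, closure A z -> exists i : I, 0 < phi (x i) z) ->
  exists (y : I -> X) (r : I -> R),
    (forall i, (exists t : R, 0 < t /\ y i = t *: x i) /\ 0 < r i /\ r i <= `|y i|) /\
    A `<=` \bigcup_(i in [set: I]) oball (y i) (r i).
Proof.
move=> fd [M hM] _ _ hx hsel.
have cov : forall z, closure A z ->
    exists i t, 0 < t /\ `|t *: x i - z| < t.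
  move=> z zA; apply: contrapT => ncov.
  have hz i s : 0 < s -> 1 <= `|x i - s *: z|.
    move=> s0; rewrite leNgt; apply/negP => hlt; apply: ncov.
    exists i, s^-1; split; first by rewrite invr_gt0.
    have -> : s^-1 *: x i - z = s^-1 *: (x i - s *: z).
      by rewrite scalerBr scalerA mulVf ?gt_eqF // scale1r.
    rewrite normrZ gtr0_norm ?invr_gt0 // -[ltRHS]mulr1 ltr_pM2l //.
    by rewrite invr_gt0.
  have [phi hphi] : {phi : X -> (X -> R) & forall w,
      (w != 0 -> @subdiff_norm R X w (phi w)) /\ (forall i, w = x i -> phi w z <= 0)}.
    apply: (@choice _ _ (fun w g => (w != 0 -> @subdiff_norm R X w g) /\
      (forall i, w = x i -> g z <= 0))) => w.
    have [[i ->]|nxi] := pselect (exists i, w = x i).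
      have [g [ds gx gz]] := @hb_point R X (x i) z fd (hx i) (hz i).
      by exists g; split => // _; split => //; rewrite gx hx.
    have [w0|w0] := eqVneq w 0.
      by exists (fun _ => 0); split => // i wi; exfalso; apply: nxi; exists i.
    have [g hg] := subdiff_exists fd w0.
    by exists g; split => // i wi; exfalso; apply: nxi; exists i.
  have [i hi] := hsel phi (fun w w0 => proj1 (hphi w) w0) z zA.
  by move: hi; rewrite ltNge (proj2 (hphi (x i)) i erefl).
have [n [e espan]] := fd.
have [K hK] := @coords_bound R X n e espan M.
pose K1 := `|K| + 1.
have K10 : 0 < K1 by rewrite /K1 ltr_wpDl.
pose S := (@Tm R X n e) @` closed_ball (0 : 'rV[R]_n) K1 `&` closure A.
have cS : compact S.
  apply: compact_closedI; last exact: closed_closure.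
  apply: continuous_compact; first exact: continuous_subspaceT (@Tm_cont R X n e).
  apply: bounded_closed_compact; last exact: closed_ball_closed.
  exists K1; split; first exact: num_real.
  move=> M' kM c; rewrite closed_ballE0 // => hc.
  exact: le_trans hc (ltW kM).
pose f (j : nat) := \bigcup_(i in [set: I]) ball (j.+1%:R *: x i) j.+1%:R.
have Sf : S `<=` cover [set: nat] f.
  move=> z [_ zA]; have [i [t [t0 ht]]] := cov z zA.
  exists (Num.truncn t) => //; exists i => //.
  rewrite -ball_normE /ball_ /=; apply: mono_ball (hx i) _ ht.
  exact: ltW (truncnS_gt t).
rewrite compact_cover in cS.
have [D' _ hD'] := cS nat setT f (fun j _ => bigcup_open (fun i _ => ball_open _ _)) Sf.
pose N := (\max_(j <- finmap.enum_fset D') j)%N.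
exists (fun i => N.+1%:R *: x i), (fun i => N.+1%:R); split.
  move=> i; split; first by exists N.+1%:R.
  by split => //; rewrite normrZ hx mulr1 ger0_norm.
move=> a Aa.
have Sa : S a.
  split; last exact: subset_closure.
  have [c [hc ac]] := hK a (hM a Aa).
  exists c; last by rewrite ac.
  by rewrite closed_ballE0 // (le_trans hc) // /K1 (le_trans (ler_norm K)) // lerDl ler01.
have [j jD [i _ hb]] := hD' a Sa.
exists i => //; rewrite /oball /=.
have hj : (j <= N)%N by apply: (@leq_bigmax_seq _ (finmap.enum_fset D') xpredT id j jD).
move: hb; rewrite -ball_normE /ball_ /= => hb.
by apply: mono_ball (hx i) _ hb; rewrite ler_nat.
Qed.
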